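(* For every finite simple configuration $c$ of size $n\times m$ and every $t\in\mathbb{N}$, we have $B_c^t(\phi(c))=\phi(F^t(c))$, where $F^t(c)$ is restricted to the rectangle $V=\{0,\dots,n-1\}\times\{0,\dots,m-1\}$.
   Context: Configurations are maps $c:\mathbb{Z}^2\to\mathbb{N}\cup\{-\infty\}$, with $c_v$ the value at $v$. For $(i,j)\in\mathbb{Z}^2$ let $N(i,j)=\{(i,j+1),(i+1,j),(i,j-1),(i-1,j)\}$. The freezing sandpile map $F$ is defined for all $v$ by $F(c)_v=-\infty$ if $c_v\ge 4$, and $F(c)_v=c_v+\sum_{u\in N(v)}\mathbf{1}[c_u\ge 4]$ otherwise (with $-\infty+k=-\infty$, and $-\infty\geq 4$ false). A finite configuration of size $n\times m$ is a configuration with $c_v\in\mathbb{N}$ for $v$ in $V=\{0,\dots,n-1\}\times\{0,\dots,m-1\}$ and $c_v=-\infty$ for all $v\notin V$; it is simple if $c_v\in\{0,1,2,3,4\}$ for all $v\in V$. Let $G=(V,E)$ be the subgraph of the grid induced by $V$, with $E=\{(u,v)\in V^2: v\in N(u)\}$, and for $v\in V$ let $N_G(v)=N(v)\cap V$. Boolean configurations are elements of $\{0,1\}^V$. Define local freezing functions on $x\in\{0,1\}^V$: $f^{\wedge}_v(x)=1$ iff $x_v=1$ or $\sum_{u\in N_G(v)}x_u=4$; $f^{M}_v(x)=1$ iff $x_v=1$ or $\sum_{u\in N_G(v)}x_u>2$; $f^{m}_v(x)=1$ iff $x_v=1$ or $\sum_{u\in N_G(v)}x_u\ge 2$; $f^{\vee}_v(x)=1$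 iff $x_v=1$ or $\sum_{u\in N_G(v)}x_u\ge1$; $f^{1}_v(x)=1$ always. For a finite simple configuration $c$, the Boolean network $B_c:\{0,1\}^V\to\{0,1\}^V$ is $B_c(x)_v=f_v(x)$ where $f_v$ is $f^\wedge,f^M,f^m,f^\vee,f^1$ according as $c_v=0,1,2,3,4$ respectively. For a configuration $c$, $\phi(c)\in\{0,1\}^V$ is given by $\phi(c)_v=1$ if $c_v=-\infty$ and $0$ otherwise. *)

(* Defs.v *)
From Stdlib Require Import ZArith.
From mathcomp Require Import all_boot.
Set Implicit Arguments. Unset Strict Implicit. Unset Printing Implicit Defensive.

(* A configuration Z^2 -> N ∪ {-oo}; None encodes -oo. *)
Definition config := (Z * Z)%type -> option nat.

Definition ge4 (a : option nat) : bool :=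
  match a with Some k => 4 <= k | None => false end.

Definition Nbrs (v : Z * Z) : seq (Z * Z) :=
  let: (i, j) := v in
  [:: (i, (j + 1)%Z); ((i + 1)%Z, j); (i, (j - 1)%Z); ((i - 1)%Z, j)].

Definition F (c : config) : config := fun v =>
  if ge4 (c v) then None
  else match c v with
       | None => None
       | Some k => Some (k + count (fun u => ge4 (c u)) (Nbrs v))
       end.

Definition V (n m : nat) : finType := ('I_n * 'I_m)%type.

Definition emb n m (v : V n m) : Z * Z := (Z.of_nat v.1, Z.of_nat v.2).

Definition inV (n m : nat) (p : Z * Z) : Prop :=
  (0 <= p.1 < Z.of_nat n)%Z /\ (0 <= p.2 < Z.of_nat m)%Z.

Definition finite_config (n m : nat) (c : config) : Prop :=
  forall p, (inV n m p -> exists k, c p = Some k) /\ (~ inV n m p -> c p = None).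

Definition simple_config (n m : nat) (c : config) : Prop :=
  finite_config n m c /\ forall p, inV n m p -> exists2 k, c p = Some k & k <= 4.

Definition adj n m (u v : V n m) : bool := has (fun p => Z.eqb p.1 (emb u).1 && Z.eqb p.2 (emb u).2) (Nbrs (emb v)).

Definition nsum n m (x : V n m -> bool) (v : V n m) : nat :=
  \sum_(u : V n m | adj u v) (x u : nat).

Definition f_and n m (x : V n m -> bool) v := x v || (nsum x v == 4).
Definition f_M   n m (x : V n m -> bool) v := x v || (2 < nsum x v).
Definition f_m   n m (x : V n m -> bool) v := x v || (2 <= nsum x v).
Definition f_or  n m (x : V n m -> bool) v := x v || (1 <= nsum x v).
Definition f_1   n m (x : V n m -> bool) (v : V n m) := true.

Definition B n m (c : config) (x : V n m -> bool) (v : V n m) : bool :=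
  match c (emb v) with
  | Some 0 => f_and x v
  | Some 1 => f_M x v
  | Some 2 => f_m x v
  | Some 3 => f_or x v
  | _ => f_1 x v
  end.

Definition phi n m (c : config) (v : V n m) : bool :=
  if c (emb v) is None then true else false.

(* Main.v *)
Require Import Defs.
From Stdlib Require Import ZArith Lia Classical FunctionalExtensionality.
From mathcomp Require Import all_boot zify.

Section S.
Variables n m : nat.

Definition eqZZ (p q : Z * Z) : bool := Z.eqb p.1 q.1 && Z.eqb p.2 q.2.

Lemma eqZZP p q : eqZZ p q -> p = q.
Proof.
case: p q => [a b] [c d] /andP [/Z.eqb_spec /= H1 /Z.eqb_spec /= H2]; by subst.
Qed.


Lemma emb_inj : injective (@emb n m).
Proof.
case=> [a b] [c d]; rewrite /emb /= => [[/Nat2Z.inj H1 /Nat2Z.inj H2]].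
by congr pair; apply: val_inj.
Qed.


Lemma emb_inV (u : V n m) : inV n m (emb u).
Proof.
case: u => [[a Ha] [b Hb]]; rewrite /inV /emb /=.
move/ltP: Ha; move/ltP: Hb; lia.
Qed.


Lemma inV_emb (p : Z * Z) : inV n m p -> exists u : V n m, emb u = p.
Proof.
case: p => [a b]; rewrite /inV /= => [[Ha Hb]].
have H1 : (Z.to_nat a < n)%N by apply/ltP; lia.
have H2 : (Z.to_nat b < m)%N by apply/ltP; lia.
exists (Ordinal H1, Ordinal H2); rewrite /emb /=; f_equal; lia.
Qed.


Lemma point_sum (P : Z * Z -> bool) (HP : forall p, P p -> inV n m p) a :
  (P a : nat) = \sum_(u : V n m) ((eqZZ a (emb u) && P a) : nat).
Proof.
case Pa: (P a); last by rewrite big1 // => u _; rewrite andbF.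
have [u0 Hu0] := inV_emb a (HP a Pa).
rewrite (bigD1 u0) //= big1.
  by rewrite -Hu0 /eqZZ !Z.eqb_refl.
move=> u Hu; rewrite andbT; case E: (eqZZ a (emb u)) => //.
move/eqZZP: E => E; rewrite -Hu0 in E; move/emb_inj: E => E.
by rewrite E eqxx in Hu.
Qed.


Lemma count_sum (P : Z * Z -> bool) (HP : forall p, P p -> inV n m p) s :
  count P s = \sum_(u : V n m) count (fun p => eqZZ p (emb u) && P p) s.
Proof.
elim: s => [|a s IH] /=; first by rewrite big1.
by rewrite big_split /= IH (point_sum _ HP a).
Qed.


Lemma nbr_le1 v x : count (fun p => eqZZ p x) (Nbrs v) <= 1.
Proof.
case: v x => [i j] [a b]; rewrite /= /eqZZ /=.
repeat (case: Z.eqb_spec => ? /=); try lia; done.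
Qed.


Lemma key (P : Z * Z -> bool) (HP : forall p, P p -> inV n m p) (v : V n m) :
  count P (Nbrs (emb v)) = \sum_(u : V n m | adj u v) (P (emb u) : nat).
Proof.
rewrite (count_sum _ HP) [RHS]big_mkcond; apply: eq_bigr => u _.
have E : count (fun p => eqZZ p (emb u) && P p) (Nbrs (emb v)) =
         count (fun p => eqZZ p (emb u) && P (emb u)) (Nbrs (emb v)).
  apply: eq_count => p; case E: (eqZZ p (emb u)) => //=.
  by rewrite (eqZZP _ _ E).
rewrite E; have := nbr_le1 (emb v) (emb u).
rewrite /adj has_count.
case: (P (emb u)).
  rewrite (eq_count (a2 := fun p => eqZZ p (emb u))); last by move=> p; rewrite andbT.
  rewrite -/(eqZZ _ _); move: (count _ _) => k.
  by case: k => [|[|k]].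
move=> _; case: ifP => _; elim: (Nbrs _) => //= a s ->; by rewrite andbF.
Qed.



Definition inVb (p : Z * Z) : bool :=
  [&& (0 <=? p.1)%Z, (p.1 <? Z.of_nat n)%Z, (0 <=? p.2)%Z & (p.2 <? Z.of_nat m)%Z].

Lemma inVbP p : inVb p -> inV n m p.
Proof.
case/and4P => /Z.leb_le ? /Z.ltb_lt ? /Z.leb_le ? /Z.ltb_lt ?; rewrite /inV; lia.
Qed.


Lemma inVb_emb (u : V n m) : inVb (emb u).
Proof.
have [H1 H2] := emb_inV u.
apply/and4P; split; [apply/Z.leb_le|apply/Z.ltb_lt|apply/Z.leb_le|apply/Z.ltb_lt]; lia.
Qed.


Lemma nsum_le4 (x : V n m -> bool) v : nsum x v <= 4.
Proof.
apply: (@leq_trans (\sum_(u : V n m | adj u v) (inVb (emb u) : nat))).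
  by apply: leq_sum => u _; rewrite inVb_emb; case: (x u).
rewrite -(key _ inVbP).
by apply: leq_trans (count_size _ _) _.
Qed.


Variable c : config.
Hypothesis Hc : simple_config n m c.

Lemma out_none t p : ~ inV n m p -> iter t F c p = None.
Proof.
move=> Hp; elim: t => [|t IH] /=; first by case: Hc => [Hf _]; case: (Hf p) => _ ->.
by rewrite /F IH.
Qed.


Lemma ge4_inV t p : ge4 (iter t F c p) -> inV n m p.
Proof.
move=> H; case: (classic (inV n m p)) => // Hp.
by rewrite out_none in H.
Qed.


Lemma phi_step t (u : V n m) :
  (phi (iter t.+1 F c) u : nat) = phi (iter t F c) u + ge4 (iter t F c (emb u)).
Proof.
rewrite /phi /= /F; case: (iter t F c (emb u)) => [k|] //=.
by case: ifP.
Qed.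


Lemma inv t (v : V n m) k0 k : c (emb v) = Some k0 -> iter t F c (emb v) = Some k ->
  k = k0 + nsum (phi (iter t F c)) v.
Proof.
move=> Hc0; elim: t k => [|t IH] k /=.
  rewrite Hc0 => [[<-]]; rewrite /nsum big1 ?addn0 // => u _.
  case: Hc => [Hf _]; case: (Hf (emb u)) => H _.
  by case: (H (emb_inV u)) => k' Hk; rewrite /phi Hk.
rewrite {1}/F; case E: (iter t F c (emb v)) => [k'|] //.
case: ifP => _; first by [].
case=> <-.
rewrite (IH _ E) -addnA; congr addn.
have K := key (fun p => ge4 (iter t F c p)) (fun p => @ge4_inV t p) v.
rewrite /= in K; rewrite K.
rewrite /nsum -big_split /=; apply: eq_bigr => u _.
by rewrite phi_step.
Qed.


End S.

Theorem proposition1 (n m : nat) (c : config) (t : nat) :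
  simple_config n m c ->
  forall v : V n m, iter t (@B n m c) (@phi n m c) v = @phi n m (iter t F c) v.
Proof.
move=> Hc; elim: t => [|t IH] v //=.
have HH := functional_extensionality _ _ IH. rewrite HH.
case: Hc => [Hf Hs]; have [k0 Hk0 Hle] := Hs _ (@emb_inV n m v).
have Hn := @nsum_le4 n m (phi (iter t F c)) v.
case E: (iter t F c (emb v)) => [k|].
  have Hk := @inv n m c (conj Hf Hs) t v k0 k Hk0 E.
  move: E Hk Hn; set G := iter t F c => E Hk Hn.
  rewrite {2}/phi /F /B Hk0 E.
  have Hx : phi G v = false by rewrite /phi E.
  move: Hk Hx Hn; set s := nsum _ v => Hk Hx Hn.
  rewrite /f_and /f_M /f_m /f_or /f_1 Hx /= Hk /s.
  case: k0 Hk0 Hle Hk => [|[|[|[|[|k0]]]]] //= _ _ _; rewrite -/s; case: ifP; lia.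
have Hx : phi (iter t F c) v = true by rewrite /phi E.
move: E Hx; set G := iter t F c => E Hx.
rewrite {2}/phi /F /B Hk0 E.
by case: k0 Hk0 Hle => [|[|[|[|k0]]]] _ _; rewrite /f_and /f_M /f_m /f_or /f_1 ?Hx.
Qed.
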